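(* Let $\hat W$ be a first degree iMPO in regular form with bond dimension $\chi$, and let $\hat V=\begin{pmatrix}\hat 1&\hat{\mathbf c}\\0&\hat{\mathsf A}\end{pmatrix}$ be its upper-left $(1+\chi)\times(1+\chi)$ block. Then $1$ is an eigenvalue of the transfer matrix $T_V$, every other eigenvalue $\lambda$ of $T_V$ satisfies $|\lambda|<1$, and there is a left eigenvector $X$ with $XT_V=X$ of the block form $$X=\begin{pmatrix}1&\mathbf x\\ \mathbf x^\dagger&\mathsf X\end{pmatrix},$$ where $\mathbf x$ is a row vector of length $\chi$ and $\mathsf X$ is a $\chi\times\chi$ matrix.
   Context: Fix the algebra $\mathcal A$ of operators on $\mathbb C^q$ with inner product $\langle\hat A,\hat B\rangle=\mathrm{Tr}[\hat A^\dagger\hat B]/\mathrm{Tr}[\hat 1]$ and an orthonormal basis $\{\hat O_\alpha\}_{0\le\alpha<q^2}$ with $\hat O_0=\hat 1$. For a matrix $\hat W$ with entries in $\mathcal A$ write $\hat W=\sum_\alpha\hat O_\alpha W_\alpha$ with complex matrices $(W_\alpha)_{ab}=\langle\hat O_\alpha,\hat W_{ab}\rangle$. For a square such $\hat W$, its transfer matrix $T_W=\sum_\alpha\overline{W_\alpha}\otimes W_\alpha$ acts on square complex matrices $X$ from the left by $XT_W=\sum_\alpha W_\alpha^\dagger XW_\alpha$; a left eigenvector means $XT_W=\lambda X$. An iMPO in regular form of bond dimension $\chi$ is a $(\chi+2)\times(\chi+2)$ matrix with entries in $\mathcal A$ (indices $0,1,\dots,\chi,\chi+1$) of block form $\hat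 W=\begin{pmatrix}\hat 1&\hat{\mathbf c}&\hat d\\0&\hat{\mathsf A}&\hat{\mathbf b}\\0&0&\hat 1\end{pmatrix}$ with block sizes $1,\chi,1$. It is called first degree if every eigenvalue of $T_A$, the transfer matrix of the $\chi\times\chi$ block $\hat{\mathsf A}$, has modulus strictly less than $1$. *)

(* Defs.v *)
From mathcomp Require Import all_boot all_algebra.
From mathcomp Require Import reals complex.
Set Implicit Arguments. Unset Strict Implicit. Unset Printing Implicit Defensive.
Import GRing.Theory Num.Theory.
Local Open Scope ring_scope.

Section Defs.
Variable R : realType.
Local Notation C := R[i].

Definition adjmx m n (M : 'M[C]_(m, n)) : 'M[C]_(n, m) := map_mx Num.conj M^T.

Definition op_inner q (A B : 'M[C]_q) : C := \tr (adjmx A *m B) / q%:R.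

Definition orthonormal_op_basis q (O : 'I_(q ^ 2) -> 'M[C]_q) : Prop :=
  (forall a b, op_inner (O a) (O b) = (a == b)%:R) /\
  (forall h : (0 < q ^ 2)%N, O (Ordinal h) = 1%:M).

Definition coefmx q (O : 'I_(q ^ 2) -> 'M[C]_q) m n (W : 'M['M[C]_q]_(m, n))
  (al : 'I_(q ^ 2)) : 'M[C]_(m, n) :=
  \matrix_(a, b) op_inner (O al) (W a b).

(* transfer matrix T_W acting on the left: X T_W = sum_alpha W_alpha^dag X W_alpha *)
Definition transfer q (O : 'I_(q ^ 2) -> 'M[C]_q) n (W : 'M['M[C]_q]_n)
  (X : 'M[C]_n) : 'M[C]_n :=
  \sum_(al < q ^ 2) adjmx (coefmx O W al) *m X *m coefmx O W al.

Definition transfer_mx q (O : 'I_(q ^ 2) -> 'M[C]_q) n (W : 'M['M[C]_q]_n)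
  : 'M[C]_(n * n) := lin_mx (transfer O W).

Definition regular_iMPO q chi (c : 'M['M[C]_q]_(1, chi)) (A : 'M['M[C]_q]_chi)
  (b : 'M['M[C]_q]_(chi, 1)) (d : 'M['M[C]_q]_(1, 1))
  : 'M['M[C]_q]_(1 + chi + 1) :=
  block_mx (block_mx (const_mx 1%:M) c 0 A) (col_mx d b) 0 (const_mx 1%:M).

Definition first_degree q (O : 'I_(q ^ 2) -> 'M[C]_q) chi
  (A : 'M['M[C]_q]_chi) : Prop :=
  forall lam : C, eigenvalue (transfer_mx O A) lam -> `|lam| < 1.

End Defs.

(* Main.v *)
From HB Require Import structures.
Require Import Defs.
From mathcomp Require Import all_boot all_order all_algebra.
From mathcomp Require Import reals complex.
From mathcomp Require Import lra.
Set Implicit Arguments. Unset Strict Implicit. Unset Printing Implicit Defensive.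
Import Order.TTheory GRing.Theory Num.Theory.
Local Open Scope ring_scope.

Lemma transfer_is_linear (R : realType) q (O : 'I_(q ^ 2) -> 'M[R[i]]_q) n
  (W : 'M['M[R[i]]_q]_n) : linear (transfer O W).
Proof.
move=> a X Y; rewrite /transfer scaler_sumr -big_split /=.
by apply: eq_bigr => al _; rewrite mulmxDr mulmxDl -scalemxAr -scalemxAl.
Qed.

HB.instance Definition _ (R : realType) q (O : 'I_(q ^ 2) -> 'M[R[i]]_q) n
  (W : 'M['M[R[i]]_q]_n) :=
  GRing.isLinear.Build R[i] 'M[R[i]]_n 'M[R[i]]_n *:%R (@transfer R q O n W)
    (transfer_is_linear O W).

Lemma mxvec_transfer (R : realType) q (O : 'I_(q ^ 2) -> 'M[R[i]]_q) n
  (W : 'M['M[R[i]]_q]_n) X :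
  mxvec X *m transfer_mx O W = mxvec (transfer O W X).
Proof. exact: mul_vec_lin. Qed.

Lemma adjmxM (R : realType) m n p (A : 'M[R[i]]_(m, n)) (B : 'M[R[i]]_(n, p)) :
  adjmx (A *m B) = adjmx B *m adjmx A.
Proof. by rewrite /adjmx trmx_mul map_mxM. Qed.

Lemma adjmxK (R : realType) m n (A : 'M[R[i]]_(m, n)) : adjmx (adjmx A) = A.
Proof. by apply/matrixP => i j; rewrite !mxE Num.Theory.conjCK. Qed.

Lemma adjmxD (R : realType) m n (A B : 'M[R[i]]_(m, n)) :
  adjmx (A + B) = adjmx A + adjmx B.
Proof. by apply/matrixP => i j; rewrite !mxE rmorphD. Qed.

Lemma adjmx1 (R : realType) n : adjmx (1%:M : 'M[R[i]]_n) = 1%:M.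
Proof. by rewrite /adjmx trmx1 map_scalar_mx rmorph1. Qed.

Lemma adjmx0 (R : realType) m n : adjmx (0 : 'M[R[i]]_(m, n)) = 0.
Proof. by apply/matrixP => i j; rewrite !mxE rmorph0. Qed.

Lemma adjmx_block (R : realType) m1 m2 n1 n2 (a : 'M[R[i]]_(m1, n1)) (b : 'M_(m1, n2))
  (c : 'M_(m2, n1)) (d : 'M_(m2, n2)) :
  adjmx (block_mx a b c d) = block_mx (adjmx a) (adjmx c) (adjmx b) (adjmx d).
Proof. by rewrite /adjmx tr_block_mx map_block_mx. Qed.

Lemma coefmxE (R : realType) q (O : 'I_(q ^ 2) -> 'M[R[i]]_q) m n
  (W : 'M['M[R[i]]_q]_(m, n)) al : coefmx O W al = map_mx (op_inner (O al)) W.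
Proof. by apply/matrixP => i j; rewrite !mxE. Qed.

Lemma adjmx_nat (R : realType) n k : adjmx ((k%:R : R[i])%:M : 'M_n) = (k%:R)%:M.
Proof. by rewrite /adjmx tr_scalar_mx map_scalar_mx rmorph_nat. Qed.

Lemma sum_block_mx (R : realType) (I : finType) m1 m2 n1 n2
  (a : I -> 'M[R[i]]_(m1, n1)) (b : I -> 'M_(m1, n2)) (c : I -> 'M_(m2, n1))
  (d : I -> 'M_(m2, n2)) :
  \sum_k block_mx (a k) (b k) (c k) (d k) =
  block_mx (\sum_k a k) (\sum_k b k) (\sum_k c k) (\sum_k d k).
Proof.
rewrite unlock /=; elim: (index_enum I) => [|k s IH] /=.
  by rewrite block_mx0.
by rewrite IH add_block_mx.
Qed.

Lemma op_inner0 (R : realType) q (A : 'M[R[i]]_q) : op_inner A 0 = 0.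
Proof. by rewrite /op_inner mulmx0 mxtrace0 mul0r. Qed.

Lemma coefV (R : realType) q (O : 'I_(q ^ 2) -> 'M[R[i]]_q) (hq : (0 < q ^ 2)%N)
  chi (c : 'M['M[R[i]]_q]_(1, chi)) (A : 'M['M[R[i]]_q]_chi)
  (b : 'M['M[R[i]]_q]_(chi, 1)) (d : 'M['M[R[i]]_q]_(1, 1)) al :
  orthonormal_op_basis O ->
  coefmx O (ulsubmx (regular_iMPO c A b d)) al =
  block_mx ((al == Ordinal hq)%:R%:M) (coefmx O c al) 0 (coefmx O A al).
Proof.
case=> orth one; rewrite /regular_iMPO block_mxKul !coefmxE map_block_mx.
congr block_mx.
- apply/matrixP => i j; rewrite !mxE !ord1 /= -(one hq) orth; by case: (al == _).
- by apply/matrixP => i j; rewrite !mxE op_inner0.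
Qed.

Lemma transferV (R : realType) q (O : 'I_(q ^ 2) -> 'M[R[i]]_q) (hq : (0 < q ^ 2)%N)
  chi (c : 'M['M[R[i]]_q]_(1, chi)) (A : 'M['M[R[i]]_q]_chi)
  (b : 'M['M[R[i]]_q]_(chi, 1)) (d : 'M['M[R[i]]_q]_(1, 1)) 
  (x00 : 'M[R[i]]_1) x y Xs :
  orthonormal_op_basis O ->
  let i0 := Ordinal hq in
  let c_ := coefmx O c in let A_ := coefmx O A in
  transfer O (ulsubmx (regular_iMPO c A b d)) (block_mx x00 x y Xs) =
  block_mx x00 (x00 *m c_ i0 + x *m A_ i0)
    (adjmx (c_ i0) *m x00 + adjmx (A_ i0) *m y)
    (\sum_al (adjmx (c_ al) *m x00 *m c_ al + adjmx (c_ al) *m x *m A_ al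
              + adjmx (A_ al) *m y *m c_ al) + transfer O A Xs).
Proof.
move=> orth i0 c_ A_; rewrite /transfer.
under eq_bigr => al _ do rewrite (coefV hq c A b d al orth) adjmx_block adjmx0
   adjmx_nat !mulmx_block !mul0mx !addr0 !mul_scalar_mx !mul_mx_scalar.
rewrite sum_block_mx; congr block_mx.
1-3: rewrite (bigD1 i0) //= big1 => [|al /negbTE->];
  rewrite ?eqxx ?mulmx0 ?addr0 -?scalemxAl ?scale1r ?scale0r ?addr0 ?mulmx0 //.
rewrite -big_split /=; apply: eq_bigr => al _.
rewrite !mulmxDl /c_ /A_; rewrite !addrA; congr (_ + _); rewrite -!addrA; congr (_ + _); exact: addrC.
Qed.

Definition nrm (R : realType) (z : R[i]) : R := complex.Re `|z|.

Lemma nrmE (R : realType) (z : R[i]) : `|z| = ((nrm z)%:C)%C.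
Proof. by rewrite /nrm RRe_real // normr_real. Qed.

Lemma nrm_ge0 (R : realType) (z : R[i]) : 0 <= nrm z.
Proof. by rewrite -ler0c -nrmE. Qed.

Lemma nrmD (R : realType) (x y : R[i]) : nrm (x + y) <= nrm x + nrm y.
Proof. by rewrite -lecR rmorphD /= -!nrmE ler_normD. Qed.

Lemma nrmM (R : realType) (x y : R[i]) : nrm (x * y) = nrm x * nrm y.
Proof. by apply: complexI; rewrite rmorphM /= -!nrmE normrM. Qed.


Lemma bern (R : realType) (h : R) k : 0 <= h -> 1 + k%:R * h <= (1 + h) ^+ k.
Proof.
move=> h0; elim: k => [|k IH]; first by rewrite mul0r addr0 expr0.
rewrite exprSr -natr1.
have hk : 0 <= k%:R * h by apply: mulr_ge0.
have : (1 + k%:R * h) * (1 + h) <= (1 + h) ^+ k * (1 + h).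
  by apply: ler_wpM2r => //; lra.
nra.
Qed.

Lemma geo (R : realType) (r K e : R) :
  0 <= r -> r < 1 -> 0 < e -> exists k, r ^+ k * K <= e.
Proof.
move=> r0 r1 e0.
case: (lerP K e) => [Ke|eK]; first by exists 0%N; rewrite expr0 mul1r.
have K0 : 0 < K by apply: lt_trans eK.
case: (eqVneq r 0) => [->|rn0]; first by exists 1%N; rewrite expr1 mul0r ltW.
have rp : 0 < r by rewrite lt_def rn0.
set h := r^-1 - 1.
have hp : 0 < h by rewrite /h subr_gt0 invf_gt1.
have ehp : 0 < e * h by apply: mulr_gt0.
have := archi_boundP (ltW (divr_gt0 K0 ehp)).
set k := Num.bound _ => Hk.
exists k.
have Hb := bern k (ltW hp).
have E : 1 + h = r^-1 by rewrite /h addrC subrK.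
move: Hb; rewrite E exprVn => Hb.
have Pp : 0 < r ^+ k by apply: exprn_gt0.
rewrite -[r ^+ k]invrK mulrC -/(_ / _) ler_pdivrMr ?invr_gt0 //.
move: Hk; rewrite ltr_pdivrMr // => Hk.
have kh0 : 0 <= k%:R * h by apply: mulr_ge0 => //; apply: ltW.
nra.
Qed.

Definition tends0 (R : realType) (a : nat -> R[i]) :=
  forall e : R, 0 < e -> exists N, forall n, (N <= n)%N -> nrm (a n) <= e.

Lemma first_order (R : realType) (c : nat -> R[i]) (r : R[i]) :
  nrm r < 1 -> tends0 (fun n => c n.+1 - r * c n) -> tends0 c.
Proof.
move=> r1 hb e e0.
set rho := nrm r; have rho0 : 0 <= rho := nrm_ge0 r.
have e2 : 0 < e / 2 by apply: divr_gt0.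
have r1' : 0 < 1 - rho by rewrite subr_gt0.
have [N HN] := hb (e / 2 * (1 - rho)) (mulr_gt0 e2 r1').
have step : forall n, (N <= n)%N ->
    nrm (c n.+1) <= rho * nrm (c n) + e / 2 * (1 - rho).
  move=> n /HN /= H1; have := nrmD (c n.+1 - r * c n) (r * c n).
  rewrite subrK nrmM -/rho; lra.
have ind : forall k, nrm (c (N + k)%N) - e / 2 <= rho ^+ k * (nrm (c N) - e / 2).
  elim=> [|k IH]; first by rewrite addn0 expr0 mul1r.
  rewrite addnS exprS -mulrA.
  have := step (N + k)%N (leq_addr _ _).
  have := ler_wpM2l rho0 IH; lra.
have [k0 Hk0] := geo (nrm (c N)) rho0 r1 e2.
exists (N + k0)%N => n Hn.
have Hn' : (k0 <= n - N)%N by rewrite leq_subRL ?(leq_trans (leq_addr _ _) Hn).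
have E : n = (N + (n - N))%N by rewrite subnKC // (leq_trans (leq_addr _ _) Hn).
have := ind (n - N)%N; rewrite -E => H1.
have H2 := ler_wiXn2l rho0 (ltW r1) Hn'.
have P0 : 0 <= rho ^+ (n - N) by apply: exprn_ge0.
have H3 := ler_wpM2r (nrm_ge0 (c N)) H2.
have H4 : rho ^+ (n - N) * (nrm (c N) - e / 2) <= rho ^+ (n - N) * nrm (c N).
  by apply: ler_wpM2l => //; lra.
lra.
Qed.

Lemma nrm0 (R : realType) : nrm (0 : R[i]) = 0.
Proof. by rewrite /nrm normr0. Qed.

Lemma tends0_0 (R : realType) (a : nat -> R[i]) : (forall n, a n = 0) -> tends0 a.
Proof. by move=> H e e0; exists 0%N => n _; rewrite H nrm0 ltW. Qed.

Lemma tends0_ext (R : realType) (a b : nat -> R[i]) :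
  (forall n, a n = b n) -> tends0 a -> tends0 b.
Proof.
by move=> E H e e0; have [N HN] := H e e0; exists N => n /HN; rewrite E.
Qed.

Lemma mx_tends0 (R : realType) N (M : 'M[R[i]]_N) (g : 'rV[R[i]]_N -> R[i])
  (glin : forall a u w, g (a *: u + w) = a * g u + g w) (v : 'rV_N) :
  (forall lam, eigenvalue M lam -> nrm lam < 1) ->
  tends0 (fun n => g (iter n (fun w => w *m M) v)).
Proof.
have g0 : g 0 = 0.
  have := glin 1 0 0; rewrite scale1r addr0 mul1r => H.
  by apply: (addrI (g 0)); rewrite addr0 -H.
case: N M g glin v g0 => [|n] M g glin v g0 Hev.
  by apply: tends0_0 => k; rewrite (thinmx0 (iter k _ v)) g0.
set w := fun k => iter k (fun w => w *m M) v.
have wS : forall k, w k.+1 = w k *m M by [].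
have gB : forall x y z, g (x - z *: y) = g x - z * g y.
  by move=> x y z; rewrite addrC -scaleNr glin mulNr addrC.
have main : forall rs : seq R[i], (forall z, z \in rs -> nrm z < 1) ->
    forall Q, tends0 (fun k => g (w k *m (\prod_(z <- rs) (M - z%:M)) *m Q)) ->
    tends0 (fun k => g (w k *m Q)).
  elim=> [|z rs IH] Hrs Q.
    by rewrite big_nil; apply: tends0_ext => k; rewrite mulmx1.
  rewrite big_cons => H.
  have Hrs' : forall z', z' \in rs -> nrm z' < 1.
    by move=> z' Hz'; apply: Hrs; rewrite in_cons Hz' orbT.
  apply: (IH Hrs').
  apply: (@first_order _ _ z (Hrs z (mem_head _ _))).
  move: H; rewrite /tends0 => H e e0; have [K HK] := H e e0.
  exists K => k Hk; have := HK k Hk.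
  rewrite wS -!mulmxA -gB.
  by rewrite mulmxBl mul_scalar_mx mulmxBr -scalemxAr.
have [rs Hrs] := closed_field_poly_normal (char_poly M).
move: Hrs; rewrite (monicP (char_poly_monic M)) scale1r => Hrs.
have Hroots : forall z, z \in rs -> nrm z < 1.
  move=> z Hz; apply: Hev; rewrite eigenvalue_root_char Hrs.
  by rewrite root_prod_XsubC.
have HP : \prod_(z <- rs) (M - z%:M) = 0.
  have := Cayley_Hamilton M; rewrite Hrs rmorph_prod /= => <-.
  by apply: eq_bigr => z _; rewrite rmorphB /= horner_mx_X horner_mx_C.
have := main rs Hroots 1%:M; rewrite HP.
move=> H; have : tends0 (fun k => g (w k *m 1%:M)).
  by apply: H => //; apply: tends0_0 => k; rewrite mulmx0 mul0mx g0.
by apply: tends0_ext => k; rewrite mulmx1.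
Qed.

Definition qf (R : realType) n (x : 'rV[R[i]]_n) (Y : 'M_n) := (x *m Y *m adjmx x) 0 0.

Lemma adjmx00 (R : realType) (M : 'M[R[i]]_1) : adjmx M 0 0 = (M 0 0)^*.
Proof. by rewrite !mxE. Qed.

Lemma qf_adjv (R : realType) n (u v : 'rV[R[i]]_n) :
  qf u (adjmx v *m v) = `|(u *m adjmx v) 0 0| ^+ 2.
Proof.
rewrite /qf mulmxA -(mulmxA (u *m adjmx v)).
have -> : v *m adjmx u = adjmx (u *m adjmx v) by rewrite adjmxM adjmxK.
by rewrite [LHS]mxE big_ord1 adjmx00 normCK.
Qed.

Lemma qf_transfer (R : realType) q (O : 'I_(q ^ 2) -> 'M[R[i]]_q) n
  (A : 'M['M[R[i]]_q]_n) x Y :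
  qf x (transfer O A Y) = \sum_al qf (x *m adjmx (coefmx O A al)) Y.
Proof.
rewrite /qf /transfer mulmx_sumr mulmx_suml summxE; apply: eq_bigr => al _.
by rewrite adjmxM adjmxK !mulmxA.
Qed.

Lemma qfB (R : realType) n (x : 'rV[R[i]]_n) Y Z : qf x (Y - Z) = qf x Y - qf x Z.
Proof. by rewrite /qf mulmxBr mulmxBl !mxE. Qed.

Lemma qfD (R : realType) n (x : 'rV[R[i]]_n) Y Z : qf x (Y + Z) = qf x Y + qf x Z.
Proof. by rewrite /qf mulmxDr mulmxDl !mxE. Qed.

Lemma qf_lin (R : realType) n (x : 'rV[R[i]]_n) a Y Z :
  qf x (a *: Y + Z) = a * qf x Y + qf x Z.
Proof. by rewrite qfD /qf -scalemxAr -scalemxAl mxE. Qed.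

Lemma adjmxZ (R : realType) m n (a : R[i]) (M : 'M[R[i]]_(m, n)) :
  adjmx (a *: M) = a^* *: adjmx M.
Proof. by apply/matrixP => i j; rewrite !mxE rmorphM. Qed.

Lemma nrm_lt1 (R : realType) (lam : R[i]) : `|lam| < 1 -> nrm lam < 1.
Proof. by rewrite nrmE => H; rewrite -(ltcR (nrm lam) 1). Qed.

Lemma eig_coef (R : realType) q (O : 'I_(q ^ 2) -> 'M[R[i]]_q) chi
  (A : 'M['M[R[i]]_q]_chi) al (v : 'rV[R[i]]_chi) mu :
  first_degree O A -> v != 0 -> v *m coefmx O A al = mu *: v -> nrm mu < 1.
Proof.
move=> fd vn0 hv.
rewrite ltNge; apply/negP => mu1.
set Aa := coefmx O A in hv; set Phi := transfer O A; set P := adjmx v *m v.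
have psdPhi : forall Y, (forall x, 0 <= qf x Y) -> forall x, 0 <= qf x (Phi Y).
  move=> Y HY x; rewrite qf_transfer; apply: sumr_ge0 => b _; exact: HY.
have mu1C : 1 <= `|mu| ^+ 2.
  apply: exprn_ege1; rewrite nrmE; by rewrite -(lecR 1 (nrm mu)) in mu1.
have psd1 : forall x, 0 <= qf x (Phi P - P).
  move=> x; rewrite qfB qf_transfer (bigD1 al) //= !qf_adjv.
  have -> : (x *m adjmx (Aa al) *m adjmx v) 0 0 = mu^* * (x *m adjmx v) 0 0.
    by rewrite -mulmxA -adjmxM hv adjmxZ -scalemxAr mxE.
  rewrite normrM exprMn norm_conjC addrAC.
  apply: addr_ge0; last by apply: sumr_ge0 => b _; rewrite qf_adjv exprn_ge0.
  rewrite subr_ge0 -{1}[X in X <= _]mul1r.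
  by apply: ler_wpM2r => //; apply: exprn_ge0.
have psdn : forall n x, 0 <= qf x (iter n Phi P - P).
  elim=> [|n IH] x; first by rewrite subrr /qf mulmx0 mul0mx mxE.
  have -> : iter n.+1 Phi P - P = Phi (iter n Phi P - P) + (Phi P - P).
    by rewrite /= /Phi linearB /= addrA subrK.
  by rewrite qfD addr_ge0 // psdPhi.
set M := transfer_mx O A.
have Hev : forall lam, eigenvalue M lam -> nrm lam < 1.
  by move=> lam /fd; apply: nrm_lt1.
pose g := fun u : 'rV[R[i]]_(chi * chi) => qf v (vec_mx u).
have glin : forall a u w, g (a *: u + w) = a * g u + g w.
  by move=> a u w; rewrite /g linearP qf_lin.
have T := mx_tends0 glin (mxvec P) Hev.
have It : forall n, iter n (fun w => w *m M) (mxvec P) = mxvec (iter n Phi P).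
  by elim=> [|n IH] //=; rewrite IH /M mxvec_transfer.
set t0 := qf v P.
have s0n : (v *m adjmx v) 0 0 != 0.
  apply: contra vn0 => /eqP H; apply/eqP/rowP => j; rewrite mxE.
  move: H; rewrite mxE.
  under eq_bigr => k _ do rewrite !mxE -normCK.
  move=> H; have := psumr_eq0P (fun k _ => exprn_ge0 2 (normr_ge0 (v 0 k))) H (i:=j) isT.
  by move/eqP; rewrite expf_eq0 /= normr_eq0 => /eqP.
have t0p : 0 < t0.
  by rewrite /t0 qf_adjv lt_def expf_eq0 /= normr_eq0 s0n exprn_ge0.
have nt0 : 0 < nrm t0.
  by rewrite -ltcR -nrmE gtr0_norm.
have [N HN] := T (nrm t0 / 2) (divr_gt0 nt0 (ltr0Sn _ 1)).
have := HN N (leqnn N); rewrite /= It /g mxvecK.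
have : t0 <= qf v (iter N Phi P).
  by rewrite -subr_ge0 -qfB psdn.
move=> Hle; have Hle' : nrm t0 <= nrm (qf v (iter N Phi P)).
  rewrite -lecR -!nrmE !ger0_norm //; last exact: ltW.
  exact: le_trans (ltW t0p) Hle.
lra.
Qed.

Lemma nrm_lt1' (R : realType) (lam : R[i]) : nrm lam < 1 -> `|lam| < 1.
Proof. by rewrite nrmE => H; rewrite -(ltcR (nrm lam) 1) in H. Qed.

Lemma nrm1 (R : realType) : nrm (1 : R[i]) = 1.
Proof. by rewrite /nrm normr1. Qed.

Unset Implicit Arguments.
Theorem proposition1 (R : realType) (q : nat) (O : 'I_(q ^ 2) -> 'M[R[i]]_q)
  (chi : nat) (c : 'M['M[R[i]]_q]_(1, chi)) (A : 'M['M[R[i]]_q]_chi)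
  (b : 'M['M[R[i]]_q]_(chi, 1)) (d : 'M['M[R[i]]_q]_(1, 1)) :
  (0 < q)%N ->
  orthonormal_op_basis O ->
  first_degree O A ->
  let W := regular_iMPO c A b d in
  let V := ulsubmx W in
  [/\ eigenvalue (transfer_mx O V) 1,
      (forall lam : R[i], eigenvalue (transfer_mx O V) lam -> lam != 1 ->
         `|lam| < 1) &
      exists (x : 'rV[R[i]]_chi) (Xs : 'M[R[i]]_chi),
        let X := block_mx (1%:M : 'M[R[i]]_1) x (adjmx x) Xs in
        transfer O V X = X].
Proof.
move=> q0 orth fd W V.
have hq : (0 < q ^ 2)%N by rewrite expn_gt0 q0.
have TV := fun x00 x y Xs => transferV hq c A b d x00 x y Xs orth.
rewrite -/W -/V /= in TV.
set i0 := Ordinal hq in TV; set c_ := coefmx O c in TV; set A_ := coefmx O A in TV.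
set M := transfer_mx O A.
have L0 : forall (v : 'rV[R[i]]_chi) (mu : R[i]), v != 0 -> v *m A_ i0 = mu *: v -> nrm mu < 1.
  by move=> v mu vn hv; exact: (eig_coef fd vn hv).
have U1 : (1%:M - A_ i0) \in unitmx.
  rewrite unitmxE unitfE; apply/negP => /det0P [w wn0 hw].
  have : w *m A_ i0 = 1 *: w.
    by move/eqP: hw; rewrite mulmxBr mulmx1 subr_eq0 scale1r => /eqP <-.
  by move/(L0 _ _ wn0); rewrite nrm1 ltxx.
have U2 : (1%:M - M) \in unitmx.
  rewrite unitmxE unitfE; apply/negP => /det0P [w wn0 hw].
  have : eigenvalue M 1.
    apply/eigenvalueP; exists w => //.
    by move/eqP: hw; rewrite mulmxBr mulmx1 subr_eq0 scale1r => /eqP <-.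
  by move/fd; rewrite normr1 ltxx.
set x := c_ i0 *m invmx (1%:M - A_ i0).
have Ex : c_ i0 + x *m A_ i0 = x.
  have : x *m (1%:M - A_ i0) = c_ i0 by rewrite /x -mulmxA mulVmx // mulmx1.
  by rewrite mulmxBr mulmx1 => <-; rewrite subrK.
set B := \sum_al (adjmx (c_ al) *m 1%:M *m c_ al + adjmx (c_ al) *m x *m A_ al
              + adjmx (A_ al) *m adjmx x *m c_ al).
set Xs := vec_mx (mxvec B *m invmx (1%:M - M)).
have EXs : B + transfer O A Xs = Xs.
  have : mxvec Xs *m (1%:M - M) = mxvec B by rewrite /Xs vec_mxK -mulmxA mulVmx // mulmx1.
  rewrite mulmxBr mulmx1 /M mxvec_transfer -linearB /= => /(can_inj mxvecK) <-.
  by rewrite subrK.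
have HX : transfer O V (block_mx 1%:M x (adjmx x) Xs) = block_mx 1%:M x (adjmx x) Xs.
  rewrite TV; congr block_mx; rewrite ?mul1mx ?mulmx1 //.
  by rewrite -[in RHS]Ex adjmxD adjmxM.
have Xn0 : block_mx (1%:M : 'M[R[i]]_1) x (adjmx x) Xs != 0.
  apply/negP => /eqP H; have := block_mxKul (1%:M : 'M[R[i]]_1) x (adjmx x) Xs.
  rewrite H -[0]block_mx0 block_mxKul => /matrixP /(_ 0 0); rewrite !mxE /=.
  by move/eqP; rewrite eq_sym oner_eq0.
split.
- apply/eigenvalueP; exists (mxvec (block_mx 1%:M x (adjmx x) Xs)).
    by rewrite mxvec_transfer HX scale1r.
  by rewrite mxvec_eq0.
- move=> lam /eigenvalueP [u hu un0] lam1.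
  set Y := vec_mx u.
  have HY : transfer O V Y = lam *: Y.
    apply: (can_inj mxvecK); rewrite -mxvec_transfer /Y vec_mxK hu.
    by rewrite linearZ /= vec_mxK.
  move: HY; rewrite -(submxK Y) TV scale_block_mx => /eq_block_mx [E1 E2 E3 E4].
  have y00 : ulsubmx Y = 0.
    move/eqP: E1; rewrite -subr_eq0 -{1}[ulsubmx Y]scale1r -scalerBl scalemx_eq0.
    by rewrite subr_eq0 eq_sym (negbTE lam1) => /eqP.
  rewrite y00 in E2 E3 E4.
  case: (eqVneq (ursubmx Y) 0) => [y0|yn0]; last first.
    apply: nrm_lt1'; apply: (L0 _ _ yn0).
    by move: E2; rewrite mul0mx add0r.
  case: (eqVneq (dlsubmx Y) 0) => [z0|zn0]; last first.
    have zn0' : adjmx (dlsubmx Y) != 0.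
      by apply: contra zn0 => /eqP H; rewrite -[dlsubmx Y]adjmxK H adjmx0.
    rewrite -norm_conjC; apply: nrm_lt1'; apply: (L0 _ _ zn0').
    by move: E3; rewrite mulmx0 add0r => E3; rewrite -adjmxZ -E3 adjmxM adjmxK.
  rewrite y0 z0 in E4.
  have Ys0 : drsubmx Y != 0.
    apply: contra un0 => /eqP H.
    by rewrite -[u]vec_mxK -/Y -(submxK Y) y00 y0 z0 H block_mx0 mxvec_eq0.
  have : eigenvalue M lam.
    apply/eigenvalueP; exists (mxvec (drsubmx Y)); last by rewrite mxvec_eq0.
    rewrite /M mxvec_transfer -linearZ /= -E4 big1 ?add0r // => al _.
    by rewrite !mulmx0 !mul0mx !addr0.
  by move/fd.
- by exists x, Xs.
Qed.
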